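(* Let $n\ge2$ and let $G,H$ be non-zero $n$-dimensional real tensors. Let their $n$-dimensional convolution $(G*H)(t)=\sum_{\tau\in\mathbb{Z}^n}G(\tau)H(t-\tau)$ be evaluated on a box of consecutive output positions of size $s_1\times\cdots\times s_n$, giving $G*H\in\mathbb{R}^{s_1\times\cdots\times s_n}$. Then for each $k=1,\dots,n$, $\operatorname{rank}(k,G*H)\le\min\big(s_k,\operatorname{rank}(k,G)\operatorname{rank}(k,H)\big)$.
   Context: Tensors are indexed from $0$ and regarded as functions on $\mathbb{Z}^n$ vanishing outside their index ranges. For a tensor $A$, $\operatorname{rank}(k,A)$ is the $k$-th Tucker rank, i.e. the rank of the mode-$k$ matricization of $A$ (the matrix whose columns are the mode-$k$ fibers of $A$); for a matrix this is its column/row rank. *)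

(* Defs.v *)
From HB Require Import structures.
From mathcomp Require Import all_boot all_order all_algebra.
From mathcomp Require Import reals.
Set Implicit Arguments. Unset Strict Implicit. Unset Printing Implicit Defensive.
Import Order.TTheory GRing.Theory Num.Theory.
Local Open Scope ring_scope.

Definition idx (n : nat) (d : 'I_n -> nat) : finType :=
  {dffun forall i : 'I_n, 'I_(d i)}.

Definition tensor (R : ringType) (n : nat) (d : 'I_n -> nat) :=
  {ffun idx d -> R}.

Definition oidx (n : nat) (d : 'I_n -> nat) (k : 'I_n) : finType :=
  {dffun forall j : {j : 'I_n | j != k}, 'I_(d (val j))}.

Definition merge n (d : 'I_n -> nat) (k : 'I_n) (i : 'I_(d k)) (c : oidx d k)
  : idx d :=
  [ffun j : 'I_n => match j =P k with
                    | ReflectT e => cast_ord (congr1 d (esym e)) i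
                    | ReflectF ne => c (exist _ j (introN eqP ne))
                    end].

Definition matricize (R : ringType) n (d : 'I_n -> nat) (k : 'I_n)
  (A : tensor R d) : 'M[R]_(d k, #|oidx d k|) :=
  \matrix_(i < d k, c < #|oidx d k|) A (merge i (enum_val c)).

Definition trank (R : fieldType) n (d : 'I_n -> nat) (k : 'I_n)
  (A : tensor R d) : nat := \rank (matricize k A).

(* A tensor regarded as a function on Z^n vanishing outside its range. *)
Definition tval (R : ringType) n (d : 'I_n -> nat) (A : tensor R d)
  (x : 'I_n -> int) : R :=
  match [pick t : idx d | [forall j, (t j)%:Z == x j]] with
  | Some t => A t
  | None => 0
  end.

(* n-dimensional convolution (G*H)(t) = sum_{tau in Z^n} G(tau) H(t - tau),
   evaluated on the box of output positions t = o + p, p in idx s.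
   (G vanishes outside its index range, so the sum is over its support.) *)
Definition conv (R : ringType) n (g h s : 'I_n -> nat) (o : 'I_n -> int)
  (G : tensor R g) (H : tensor R h) : tensor R s :=
  [ffun p : idx s => \sum_(tau : idx g)
      G tau * tval H (fun j => o j + (p j)%:Z - (tau j)%:Z)].

(* Main.v *)
Require Import Defs.
From HB Require Import structures.
From mathcomp Require Import all_boot all_order all_algebra.
From mathcomp Require Import reals.
Set Implicit Arguments. Unset Strict Implicit. Unset Printing Implicit Defensive.
Import Order.TTheory GRing.Theory Num.Theory.
Local Open Scope ring_scope.

Section Helpers.
Variables (n : nat) (d : 'I_n -> nat) (k : 'I_n).

Definition rest (t : idx d) : oidx d k :=
  @finfun _ (fun j : {j : 'I_n | j != k} => 'I_(d (val j))) (fun j => t (val j)).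

Lemma restE (t : idx d) j : rest t j = t (val j).
Proof. by rewrite /rest ffunE. Qed.

Lemma merge_k (i : 'I_(d k)) (c : oidx d k) : val (Defs.merge i c k) = val i.
Proof.
rewrite /Defs.merge ffunE.
refine (match (k =P k) as r0 in reflect _ b0 return
  val (match r0 with ReflectT e => cast_ord (congr1 d (esym e)) i
       | ReflectF ne => c (exist _ k (introN eqP ne)) end) = val i
  with ReflectT e => _ | ReflectF ne => _ end) => //.
Qed.

Lemma merge_ne (i : 'I_(d k)) (c : oidx d k) j (h : j != k) :
  val (Defs.merge i c j) = val (c (exist _ j h)).
Proof.
rewrite /Defs.merge ffunE.
refine (match (j =P k) as r0 in reflect _ b0 return
  val (match r0 with ReflectT e => cast_ord (congr1 d (esym e)) i
       | ReflectF ne => c (exist _ j (introN eqP ne)) end) = val (c (exist _ j h))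
  with ReflectT e => _ | ReflectF ne => _ end).
  by exfalso; move: h; rewrite e eqxx.
by rewrite (bool_irrelevance (introN eqP ne) h).
Qed.

Lemma merge_kE (i : 'I_(d k)) (c : oidx d k) : Defs.merge i c k = i.
Proof. by apply/val_inj; rewrite merge_k. Qed.

Lemma rest_merge (i : 'I_(d k)) (c : oidx d k) : rest (Defs.merge i c) = c.
Proof. by apply/ffunP => -[j h]; apply/val_inj; rewrite restE /= (merge_ne i c h). Qed.

Lemma merge_rest (t : idx d) : Defs.merge (t k) (rest t) = t.
Proof.
apply/ffunP => j; apply/val_inj.
case: (eqVneq j k) => [->|h]; first by rewrite merge_k.
by rewrite (merge_ne _ _ h) restE.
Qed.

Lemma sum_split (R : nmodType) (F : 'I_(d k) -> oidx d k -> R) :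
  \sum_(t : idx d) F (t k) (rest t) = \sum_a \sum_c F a c.
Proof.
rewrite pair_big /=.
rewrite (reindex (fun p : 'I_(d k) * oidx d k => Defs.merge p.1 p.2)) /=.
  by apply: eq_bigr => -[a c] _ /=; rewrite merge_kE rest_merge.
exists (fun t : idx d => (t k, rest t)) => [[a c] _|t _] /=.
  by rewrite merge_kE rest_merge.
by rewrite merge_rest.
Qed.

End Helpers.

Section TvalDec.
Variables (R : fieldType) (n : nat) (h : 'I_n -> nat) (k : 'I_n) (H : tensor R h).

Definition CHx (z : int) (y : 'I_(trank k H)) : R :=
  match [pick a : 'I_(h k) | a%:Z == z] with
  | Some a => col_base (matricize k H) a y | None => 0 end.

Definition RHx (w : {j : 'I_n | j != k} -> int) (y : 'I_(trank k H)) : R :=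
  match [pick c : oidx h k | [forall j, (c j)%:Z == w j]] with
  | Some c => row_base (matricize k H) y (enum_rank c) | None => 0 end.

Lemma tval_dec (x : 'I_n -> int) (z : int) (w : {j : 'I_n | j != k} -> int) : z = x k -> (forall j, w j = x (val j)) ->
  Defs.tval H x = \sum_y CHx z y * RHx w y.
Proof.
move=> Hz Hw; rewrite /Defs.tval /CHx /RHx.
case: pickP => [t /forallP /= Ht | Hn].
  case: pickP => [a /eqP Ha | Hna]; last first.
    by move: (Hna (t k)); rewrite Hz (eqP (Ht k)) eqxx.
  case: pickP => [c /forallP /= Hc | Hnc]; last first.
    move: (Hnc (rest k t)) => /negbT /negP; case; apply/forallP => j.
    by rewrite restE Hw (eqP (Ht (val j))).
  have -> : a = t k.
    apply/val_inj => /=; apply/eqP; rewrite -eqz_nat.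
    by rewrite Ha Hz (eqP (Ht k)).
  have -> : c = rest k t.
    apply/ffunP => j; apply/val_inj => /=; apply/eqP; rewrite -eqz_nat.
    by rewrite restE (eqP (Hc j)) Hw (eqP (Ht (val j))).
  transitivity (matricize k H (t k) (enum_rank (rest k t))).
    by rewrite mxE enum_rankK merge_rest.
  by rewrite -{1}(mulmx_base (matricize k H)) mxE.
symmetry; apply: big1 => y _.
case: pickP => [a /eqP Ha | _]; last by rewrite mul0r.
case: pickP => [c /forallP /= Hc | _]; last by rewrite mulr0.
move: (Hn (Defs.merge a c)) => /negbT /negP; case; apply/forallP => j.
case: (eqVneq j k) => [->|hj]; first by rewrite merge_k -Hz Ha.
by rewrite (merge_ne _ _ hj) (eqP (Hc _)) Hw.
Qed.

End TvalDec.

Section Main.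
Variables (R : fieldType) (n : nat) (g h s : 'I_n -> nat) (o : 'I_n -> int)
  (G : tensor R g) (H : tensor R h) (k : 'I_n).

Let T := ('I_(trank k G) * 'I_(trank k H))%type.
Let MG := matricize k G.

Definition wfun (c : oidx s k) (c' : oidx g k) : {j : 'I_n | j != k} -> int :=
  fun j => o (val j) + (c j)%:Z - (c' j)%:Z.

Definition Pm : 'M[R]_(s k, #|{: T}|) :=
  \matrix_(i, e) \sum_(a < g k) col_base MG a (enum_val e).1 *
      @CHx _ _ _ k H (o k + (i : nat)%:Z - (a : nat)%:Z) (enum_val e).2.

Definition Qm : 'M[R]_(#|{: T}|, #|oidx s k|) :=
  \matrix_(e, cc) \sum_(c' : oidx g k) row_base MG (enum_val e).1 (enum_rank c') *
      @RHx _ _ _ k H (wfun (enum_val cc) c') (enum_val e).2.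

Lemma G_dec (t : idx g) :
  G t = \sum_x col_base MG (t k) x * row_base MG x (enum_rank (rest k t)).
Proof.
transitivity (MG (t k) (enum_rank (rest k t))).
  by rewrite /MG mxE enum_rankK merge_rest.
by rewrite -{1}(mulmx_base MG) mxE.
Qed.

Lemma conv_fact : matricize k (conv s o G H) = Pm *m Qm.
Proof.
apply/matrixP => i cc; rewrite !mxE ffunE.
set p := Defs.merge i (enum_val cc).
pose F (a : 'I_(g k)) (c' : oidx g k) :=
  (\sum_x col_base MG a x * row_base MG x (enum_rank c')) *
  (\sum_y @CHx _ _ _ k H (o k + (i : nat)%:Z - (a : nat)%:Z) y * @RHx _ _ _ k H (wfun (enum_val cc) c') y).
transitivity (\sum_(t : idx g) F (t k) (rest k t)).
  apply: eq_bigr => t _; rewrite /F G_dec; congr (_ * _).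
  apply: tval_dec => [|j] /=; first by rewrite /p merge_k.
  case: j => j hj; rewrite /wfun /= restE /p (merge_ne _ _ hj) //.
rewrite sum_split.
rewrite (reindex (@enum_rank T)) /=; last by apply: onW_bij; exact: enum_rank_bij.
transitivity (\sum_a \sum_c' \sum_(xy : T)
   (col_base MG a xy.1 * @CHx _ _ _ k H (o k + (i : nat)%:Z - (a : nat)%:Z) xy.2) *
   (row_base MG xy.1 (enum_rank c') * @RHx _ _ _ k H (wfun (enum_val cc) c') xy.2)).
  apply: eq_bigr => a _; apply: eq_bigr => c' _.
  rewrite /F big_distrlr /= pair_big /=.
  by apply: eq_bigr => -[x y] _ /=; rewrite mulrACA.
rewrite exchange_big /=.
under eq_bigr do rewrite exchange_big /=.
rewrite exchange_big /=; apply: eq_bigr => xy _.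
rewrite !mxE !enum_rankK big_distrlr /=.
by rewrite exchange_big.
Qed.

End Main.

Theorem lemma30 (R : realType) (n : nat) (g h s : 'I_n -> nat)
  (o : 'I_n -> int) (G : tensor R g) (H : tensor R h) :
  (2 <= n)%N -> G != 0 -> H != 0 ->
  forall k : 'I_n,
    (trank k (conv s o G H) <= minn (s k) (trank k G * trank k H))%N.
Proof.
move=> _ _ _ k; rewrite leq_min /trank rank_leq_row /=.
rewrite conv_fact.
apply: leq_trans (mxrankM_maxl _ _) _; apply: leq_trans (rank_leq_col _) _.
by rewrite card_prod !card_ord.
Qed.
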